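(* Under the setup in the context, assume in addition that the block GMRES residual $F_{j-1}^{(G)}$ has rank $L$. Then $\operatorname{rank}C_j=\operatorname{rank}\hat H_{jj}=\operatorname{rank}H_j-(j-1)L$.
   Context: Let $n,L\ge1$, $A\in\mathbb C^{n\times n}$, $B,X_0\in\mathbb C^{n\times L}$, $F_0=B-AX_0$, and let $F_0=V_1S_0$ be a reduced QR factorization ($V_1\in\mathbb C^{n\times L}$ with orthonormal columns, $S_0\in\mathbb C^{L\times L}$ upper triangular). Fix $j\ge2$. The block Arnoldi process (possibly with dependent basis vectors replaced by new orthonormal vectors) yields $W_k=[V_1,\dots,V_k]\in\mathbb C^{n\times kL}$ ($k\le j+1$) with orthonormal columns, $V_i\in\mathbb C^{n\times L}$, and the block Arnoldi relation $AW_j=W_{j+1}\bar H_j$, where $\bar H_j=(H_{ik})\in\mathbb C^{(j+1)L\times jL}$ has $L\times L$ blocks $H_{ik}$, is block upper Hessenberg ($H_{ik}=0$ for $i>k+1$), and each $H_{k+1,k}$ is upper triangular. For $k\le j$, $\bar H_k$ denotes the leading $(k+1)L\times kL$ submatrix of $\bar H_j$ and $H_k$ the leading $kL\times kL$ submatrix. $E^{[m]}\in\mathbb R^{mL\times L}$ denotes the first $L$ columns of $I_{mL}$. For $k\ge1$ with $\bar H_k$ of full column rank, the block GMRES iterate is $X_k^{(G)}=X_0+W_kY_k^{(G)}$, where $Y_k^{(G)}\in\mathbb C^{kL\times L}$ is the unique minimizer of $\|\bar H_kY-E^{[k+1]}S_0\|_F$ (Frobenius norm), and $F_k^{(G)}=B-AX_k^{(G)}$.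 Block QR factorization: assume $\bar H_j$ has full column rank. There are unitary matrices $\Omega_i=\begin{bmatrix}Q_i^{(11)}&Q_i^{(12)}\\Q_i^{(21)}&Q_i^{(22)}\end{bmatrix}\in\mathbb C^{2L\times 2L}$ ($i=1,\dots,j$, all four blocks $L\times L$); for $m\ge i+1$ put $Q_i^{(m)}=\mathrm{diag}(I_{(i-1)L},\Omega_i,I_{(m-i-1)L})\in\mathbb C^{mL\times mL}$ and $\bar Q_k=Q_k^{(k+1)}Q_{k-1}^{(k+1)}\cdots Q_1^{(k+1)}$. The $\Omega_i$ are chosen recursively so that $\bar Q_k\bar H_k=\begin{bmatrix}R_k\\ 0_{L\times kL}\end{bmatrix}$ with $R_k\in\mathbb C^{kL\times kL}$ upper triangular and nonsingular ($k=1,\dots,j$). In particular $Q_{j-1}^{(j+1)}\cdots Q_1^{(j+1)}\bar H_j=\begin{bmatrix}R_{j-1}&Z_j\\0&\hat H_{jj}\\0&H_{j+1,j}\end{bmatrix}$ for some $Z_j\in\mathbb C^{(j-1)L\times L}$, $\hat H_{jj}\in\mathbb C^{L\times L}$; correspondingly $Q_{j-1}^{(j)}\cdots Q_1^{(j)}H_j=\begin{bmatrix}R_{j-1}&Z_j\\0&\hat H_{jj}\end{bmatrix}$; and $\Omega_j\begin{bmatrix}\hat H_{jj}\\H_{j+1,j}\end{bmatrix}=\begin{bmatrix}N_j\\0\end{bmatrix}$ with $N_j$ upper triangular and nonsingular, so $R_j=\begin{bmatrix}R_{j-1}&Z_j\\0&N_j\end{bmatrix}$. Write $\bar Q_{j-1}E^{[j]}S_0=\begin{bmatrix}G_{j-1}\\\tilde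 C_j\end{bmatrix}$ with $G_{j-1}\in\mathbb C^{(j-1)L\times L}$, $\tilde C_j\in\mathbb C^{L\times L}$, and set $C_j=Q_j^{(11)}\tilde C_j$. *)

(* Defs.v *)
From HB Require Import structures.
From mathcomp Require Import all_boot all_order all_algebra.
Set Implicit Arguments. Unset Strict Implicit. Unset Printing Implicit Defensive.
Import Order.TTheory GRing.Theory Num.Theory.
Local Open Scope ring_scope.

Section BlockDefs.
Variable C : numClosedFieldType.

Definition ctr (m p : nat) (M : 'M[C]_(m, p)) : 'M[C]_(p, m) :=
  (map_mx Num.conj M)^T.

(* entry of M at (0-based) nat indices, 0 if out of range *)
Definition entry (m p : nat) (M : 'M[C]_(m, p)) (i k : nat) : C :=
  match @insub nat (fun x => x < m)%N 'I_m i, @insub nat (fun x => x < p)%N 'I_p k with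
  | Some a, Some b => M a b
  | _, _ => 0
  end.

Definition lsub (q r : nat) (m p : nat) (M : 'M[C]_(m, p)) : 'M[C]_(q, r) :=
  \matrix_(i < q, k < r) entry M i k.

(* the (a,b) block of size L x L, 1-based block indices *)
Definition blk (L : nat) (a b : nat) (m p : nat) (M : 'M[C]_(m, p)) : 'M[C]_L :=
  \matrix_(i < L, k < L) entry M ((a.-1) * L + i)%N ((b.-1) * L + k)%N.

Definition upper_tri (L : nat) (M : 'M[C]_L) : Prop :=
  forall i k : 'I_L, (k < i)%N -> M i k = 0.

Definition frob2 (m p : nat) (M : 'M[C]_(m, p)) : C :=
  \sum_(i < m) \sum_(k < p) `|M i k| ^+ 2.

Definition Eblk (L m : nat) : 'M[C]_(m * L, L) := lsub (m * L) L (1%:M : 'M[C]_(m * L)).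

(* Q_i^(m) = diag(I_{(i-1)L}, Omega_i, I_{(m-i-1)L}) *)
Definition Qemb (L : nat) (Om : nat -> 'M[C]_(2 * L)) (i m : nat) : 'M[C]_(m * L) :=
  \matrix_(r < m * L, c < m * L)
    if [&& ((i.-1) * L <= r)%N, (r < (i.-1) * L + 2 * L)%N,
           ((i.-1) * L <= c)%N & (c < (i.-1) * L + 2 * L)%N]
    then entry (Om i) (r - (i.-1) * L)%N (c - (i.-1) * L)%N
    else (r == c :> nat)%:R.

(* Q_k^(m) Q_{k-1}^(m) ... Q_1^(m) *)
Definition Qprod (L : nat) (Om : nat -> 'M[C]_(2 * L)) (m k : nat) : 'M[C]_(m * L) :=
  foldr (fun i P => Qemb Om i m *m P) 1%:M (rev (iota 1 k)).

Definition Qbar (L : nat) (Om : nat -> 'M[C]_(2 * L)) (k : nat) : 'M[C]_(k.+1 * L) :=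
  Qprod Om k.+1 k.

End BlockDefs.

(* Main.v *)
Require Import Defs.
From HB Require Import structures.
From mathcomp Require Import all_boot all_order all_algebra zify ring.
Set Implicit Arguments. Unset Strict Implicit. Unset Printing Implicit Defensive.
Import Order.TTheory GRing.Theory Num.Theory.
Local Open Scope ring_scope.

Section H.
Variable C : numClosedFieldType.

Lemma ctr_mul m n p (A : 'M[C]_(m,n)) (B : 'M[C]_(n,p)) : ctr (A *m B) = ctr B *m ctr A.
Proof. by rewrite /ctr map_mxM trmx_mul. Qed.

Lemma entryE m p (M : 'M[C]_(m,p)) i l (hi : (i < m)%N) (hl : (l < p)%N) :
  entry M i l = M (Ordinal hi) (Ordinal hl).
Proof. by rewrite /entry insubT /= insubT. Qed.

Lemma entry_ord m p (M : 'M[C]_(m,p)) (i : 'I_m) (l : 'I_p) : entry M i l = M i l.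
Proof. rewrite (entryE _ (ltn_ord i) (ltn_ord l)); congr (M _ _); exact: val_inj. Qed.

Lemma entry_outr m p (M : 'M[C]_(m,p)) i l : (m <= i)%N -> entry M i l = 0.
Proof. by move=> h; rewrite /entry insubF // ltnNge h. Qed.
Lemma entry_outc m p (M : 'M[C]_(m,p)) i l : (p <= l)%N -> entry M i l = 0.
Proof. by move=> h; rewrite /entry; case: insub => // ?; rewrite insubF // ltnNge h. Qed.

Definition Sel q s o : 'M[C]_(q,s) := \matrix_(i < q, t < s) ((t : nat) == (o + i)%N)%:R.

Lemma SelM q s o p (M : 'M[C]_(s,p)) (i : 'I_q) (l : 'I_p) :
  (Sel q s o *m M) i l = entry M (o + i) l.
Proof.
rewrite mxE; case: (ltnP (o + i) s) => h.
  rewrite (bigD1 (Ordinal h)) //= big1 ?addr0.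
    by rewrite mxE eqxx mul1r (entryE _ h (ltn_ord l)); congr (M _ _); exact: val_inj.
  move=> t /eqP ht; rewrite mxE; case: eqP => [e|]; last by rewrite mul0r.
  by case: ht; apply: val_inj.
rewrite entry_outr // big1 // => t _; rewrite mxE; case: eqP => [e|]; last by rewrite mul0r.
by move: (ltn_ord t); rewrite e ltnNge h.
Qed.

Lemma entry_tr m p (M : 'M[C]_(m,p)) i l : entry M^T i l = entry M l i.
Proof.
case: (ltnP i p) => hi; last by rewrite entry_outr // entry_outc.
case: (ltnP l m) => hl; last by rewrite entry_outc // entry_outr.
by rewrite (entryE _ hi hl) (entryE _ hl hi) mxE.
Qed.

Lemma MSelt q s o p (M : 'M[C]_(p,s)) (i : 'I_p) (l : 'I_q) :
  (M *m (Sel q s o)^T) i l = entry M i (o + l).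
Proof. by rewrite -(trmxK (M *m _)) trmx_mul trmxK mxE SelM entry_tr. Qed.

Lemma Sel_mul q s o u o' : (o + q <= s)%N ->
  Sel q s o *m Sel s u o' = Sel q u (o' + o).
Proof.
move=> h; apply/matrixP => i t; rewrite SelM.
have hi : (o + i < s)%N by apply: leq_trans h; rewrite ltn_add2l.
by rewrite (entryE _ hi (ltn_ord t)) !mxE /= addnA.
Qed.

Lemma Sel_Selt q s o q' o' (i : 'I_q) (l : 'I_q') :
  (Sel q s o *m (Sel q' s o')^T) i l = ((o' + l < s)%N && (o' + l == o + i)%N)%:R.
Proof.
rewrite MSelt; case: (ltnP (o' + l) s) => h; last by rewrite entry_outc.
by rewrite (entryE _ (ltn_ord i) h) mxE.
Qed.

Lemma Sel_Selt1 q s o : (o + q <= s)%N -> Sel q s o *m (Sel q s o)^T = 1%:M.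
Proof.
move=> h; apply/matrixP => i l; rewrite Sel_Selt mxE eqn_add2l.
have -> : (o + l < s)%N by apply: leq_trans h; rewrite ltn_add2l.
by rewrite eq_sym.
Qed.

Lemma Sel_Selt0 q s o q' o' : (o' + q' <= o)%N || (o + q <= o')%N ->
  Sel q s o *m (Sel q' s o')^T = 0.
Proof.
move=> h; apply/matrixP => i l; rewrite Sel_Selt mxE.
case: eqP => [e|]; last by rewrite andbF.
have := ltn_ord i; have := ltn_ord l; move: h; rewrite e. lia.
Qed.

Lemma SeltSel q s o (r c : 'I_s) :
  ((Sel q s o)^T *m Sel q s o) r c = [&& (o <= r)%N, (r < o + q)%N & (r == c)]%:R.
Proof.
rewrite mxE; case: (boolP ((o <= r)%N && (r < o + q)%N)) => h.
  have hu : (r - o < q)%N by lia.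
  rewrite (bigD1 (Ordinal hu)) //= big1 ?addr0.
    rewrite !mxE /= subnKC; last by lia.
    rewrite eqxx mul1r; move/andP: h => [-> ->] /=; by rewrite eq_sym.
  move=> u /eqP hu'; rewrite !mxE; case: eqP => [e|]; last by rewrite mul0r.
  by case: hu'; apply: val_inj => /=; lia.
rewrite big1; first by move: h; case: (o <= r)%N; case: (r < o + q)%N.
move=> u _; rewrite !mxE; case: eqP => [e|]; last by rewrite mul0r.
by exfalso; move: h; rewrite e; have := ltn_ord u; lia.
Qed.

Lemma Selt_sum s a b : s = (a + b)%N ->
  (Sel a s 0)^T *m Sel a s 0 + (Sel b s a)^T *m Sel b s a = 1%:M.
Proof.
move=> hs; apply/matrixP => r c; rewrite [LHS]mxE !SeltSel [RHS]mxE.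
have := ltn_ord r; case: eqP => [->|] /=; last by rewrite !andbF addr0.
rewrite !andbT add0n; case: (ltnP (val c) a) => h /=.
  by rewrite addr0.
by move=> hc; rewrite add0r -hs hc.
Qed.

Lemma Sel_full s : Sel s s 0 = 1%:M.
Proof. by apply/matrixP => i t; rewrite !mxE add0n eq_sym. Qed.

Lemma lsub_Sel q r m p (M : 'M[C]_(m,p)) :
  lsub q r M = Sel q m 0 *m M *m (Sel r p 0)^T.
Proof.
apply/matrixP => i l; rewrite MSelt mxE add0n.
case: (ltnP l p) => hl; last by rewrite !entry_outc.
by rewrite (entryE (Sel q m 0 *m M) (ltn_ord i) hl) SelM add0n.
Qed.
Lemma rank_ctr m p (M : 'M[C]_(m,p)) : \rank (ctr M) = \rank M.
Proof. by rewrite /ctr mxrank_tr mxrank_map. Qed.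

Lemma SeltM q s o p (M : 'M[C]_(q,p)) (r : 'I_s) (c : 'I_p) :
  ((Sel q s o)^T *m M) r c = if (o <= r)%N && (r < o + q)%N then entry M (r - o) c else 0.
Proof.
rewrite mxE; case: ifP => h.
  have hu : (r - o < q)%N by lia.
  rewrite (bigD1 (Ordinal hu)) //= big1 ?addr0.
    rewrite !mxE /= subnKC; last by lia.
    by rewrite eqxx mul1r -(entry_ord M (Ordinal hu) c).
  move=> u /eqP hu'; rewrite !mxE; case: eqP => [e|]; last by rewrite mul0r.
  by case: hu'; apply: val_inj => /=; lia.
apply: big1 => u _; rewrite !mxE; case: eqP => [e|]; last by rewrite mul0r.
by exfalso; move: h; rewrite e; have := ltn_ord u; lia.
Qed.

Lemma MSel q s o p (M : 'M[C]_(p,q)) (r : 'I_p) (c : 'I_s) :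
  (M *m Sel q s o) r c = if (o <= c)%N && (c < o + q)%N then entry M r (c - o) else 0.
Proof.
rewrite -(trmxK (M *m _)) trmx_mul mxE SeltM; case: ifP => // _.
by rewrite entry_tr.
Qed.

Lemma blk_Sel L a b m p (M : 'M[C]_(m,p)) :
  blk L a b M = Sel L m (a.-1 * L) *m M *m (Sel L p (b.-1 * L))^T.
Proof.
apply/matrixP => i l; rewrite MSelt mxE.
case: (ltnP (b.-1 * L + l) p) => hl; last by rewrite !entry_outc.
by rewrite (entryE (Sel L m _ *m M) (ltn_ord i) hl) SelM.
Qed.

Lemma Qemb_Sel L (Om : nat -> 'M[C]_(2 * L)) i m :
  Qemb Om i m = 1%:M + (Sel (2 * L) (m * L) (i.-1 * L))^T *m (Om i - 1%:M)
                       *m Sel (2 * L) (m * L) (i.-1 * L).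
Proof.
apply/matrixP => r c; rewrite [RHS]mxE MSel !mxE.
set a := (i.-1 * L)%N.
case: (boolP ((a <= c)%N && (c < a + 2 * L)%N)) => hc; last first.
  rewrite addr0; case: ifP => //; move: hc; lia.
have hcl : (c - a < 2 * L)%N by lia.
rewrite (entryE _ (ltn_ord r) hcl) SeltM.
case: (boolP ((a <= r)%N && (r < a + 2 * L)%N)) => hr; last first.
  rewrite addr0; case: ifP => //; move: hr; lia.
have hrl : (r - a < 2 * L)%N by lia.
rewrite andbT hr.
have E1 : forall u v, (u < 2 * L)%N -> (v < 2 * L)%N ->
   entry (Om i - 1%:M) u v = entry (Om i) u v - (u == v)%:R.
  by move=> u v hu hv; rewrite !(entryE _ hu hv) !mxE.
rewrite (E1 (r - a)%N (c - a)%N hrl hcl).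
have -> : (r - a == c - a)%N = (r == c :> nat) by apply/eqP/eqP; lia.
by rewrite addrC subrK.
Qed.

Lemma ctr_Sel q s o : ctr (Sel q s o) = (Sel q s o)^T.
Proof. by apply/matrixP => i l; rewrite !mxE rmorph_nat. Qed.
Lemma ctr_Selt q s o : ctr (Sel q s o)^T = Sel q s o.
Proof. by apply/matrixP => i l; rewrite !mxE rmorph_nat. Qed.
Lemma ctr1 s : ctr (1%:M : 'M[C]_s) = 1%:M.
Proof. by rewrite /ctr map_mx1 trmx1. Qed.
Lemma ctrD m p (A B : 'M[C]_(m,p)) : ctr (A + B) = ctr A + ctr B.
Proof. by rewrite /ctr map_mxD linearD. Qed.
Lemma ctrN m p (A : 'M[C]_(m,p)) : ctr (- A) = - ctr A.
Proof. by rewrite /ctr map_mxN linearN. Qed.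
Lemma ctrB m p (A B : 'M[C]_(m,p)) : ctr (A - B) = ctr A - ctr B.
Proof. by rewrite ctrD ctrN. Qed.
Lemma ctrK m p (A : 'M[C]_(m,p)) : ctr (ctr A) = A.
Proof. by apply/matrixP => i l; rewrite !mxE conjCK. Qed.

Lemma Qemb_unitary L (Om : nat -> 'M[C]_(2 * L)) i m :
  (i.-1 * L + 2 * L <= m * L)%N -> ctr (Om i) *m Om i = 1%:M ->
  ctr (Qemb Om i m) *m Qemb Om i m = 1%:M.
Proof.
move=> hw hu; rewrite Qemb_Sel; set S := Sel _ _ _.
set D := ctr (Om i) - 1%:M; set E := Om i - 1%:M.
have cQ : ctr (1%:M + S^T *m E *m S) = 1%:M + S^T *m D *m S.
  by rewrite ctrD ctr1 !ctr_mul ctr_Selt ctr_Sel ctrB ctr1 mulmxA.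
rewrite cQ.
have SS : S *m S^T = 1%:M by apply: Sel_Selt1.
have key : D + E + D *m E = 0.
  rewrite /D /E mulmxBl mulmxBr hu !mul1mx mulmx1.
  by apply/matrixP => r c; rewrite !mxE; ring.
rewrite mulmxDl mul1mx mulmxDr mulmx1.
have -> : S^T *m D *m S *m (S^T *m E *m S) = S^T *m (D *m E) *m S.
  by rewrite -!mulmxA (mulmxA S) SS mul1mx.
rewrite -addrA; have -> : S^T *m E *m S + (S^T *m D *m S + S^T *m (D *m E) *m S) =
          S^T *m (E + (D + D *m E)) *m S by rewrite !mulmxDr !mulmxDl.
by rewrite addrA (addrC E) key mulmx0 mul0mx addr0.
Qed.

Lemma Qprod_S L (Om : nat -> 'M[C]_(2 * L)) m t :
  Qprod Om m t.+1 = Qemb Om t.+1 m *m Qprod Om m t.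
Proof. by rewrite /Qprod -[t.+1]addn1 iotaD rev_cat /= add1n addn1. Qed.

Lemma Qprod_0 L (Om : nat -> 'M[C]_(2 * L)) m : Qprod Om m 0 = 1%:M.
Proof. by []. Qed.

Lemma Qprod_unitary L (Om : nat -> 'M[C]_(2 * L)) m t :
  (t.+1 * L <= m * L)%N ->
  (forall i, (1 <= i <= t)%N -> ctr (Om i) *m Om i = 1%:M) ->
  ctr (Qprod Om m t) *m Qprod Om m t = 1%:M.
Proof.
elim: t => [|t IH] ht hu; first by rewrite Qprod_0 ctr1 mulmx1.
rewrite Qprod_S ctr_mul mulmxA -(mulmxA (ctr _) (ctr _)) Qemb_unitary ?mulmx1.
- apply: IH => [|i hi]; last by apply: hu; lia.
  by apply: leq_trans ht; rewrite leq_mul2r leqnSn orbT.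
- by move: ht; rewrite /= !mulSn; lia.
- by apply: hu; lia.
Qed.

Lemma Qemb_commute L (Om : nat -> 'M[C]_(2 * L)) i m :
  (i.-1 * L + 2 * L <= m * L)%N ->
  let E1 := Sel (m * L) (m.+1 * L) 0 in
  E1 *m Qemb Om i m.+1 = Qemb Om i m *m E1 /\
  Qemb Om i m.+1 *m E1^T = E1^T *m Qemb Om i m.
Proof.
move=> hw E1; rewrite !Qemb_Sel.
set P1 := Sel (2 * L) (m * L) _; set P2 := Sel (2 * L) (m.+1 * L) _.
set X := Om i - 1%:M.
have hmL : (0 + m * L <= m.+1 * L)%N by rewrite add0n leq_mul2r leqnSn orbT.
have EE : E1 *m E1^T = 1%:M by apply: Sel_Selt1.
have PE : P1 *m E1 = P2 by rewrite /P1 /E1 Sel_mul // addn0.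
have PEt : P2 *m E1^T = P1 by rewrite -PE -mulmxA EE mulmx1.
have PEt' : E1 *m P2^T = P1^T by rewrite -PEt trmx_mul trmxK.
split.
  rewrite mulmxDr mulmxDl mulmx1 mul1mx; congr (_ + _).
  by rewrite !mulmxA PEt' -!mulmxA PE.
rewrite mulmxDr mulmxDl mulmx1 mul1mx; congr (_ + _).
by rewrite -!mulmxA PEt !mulmxA -trmx_mul PE.
Qed.

Lemma Qprod_commute L (Om : nat -> 'M[C]_(2 * L)) m t :
  (t.+1 * L <= m * L)%N ->
  let E1 := Sel (m * L) (m.+1 * L) 0 in
  E1 *m Qprod Om m.+1 t = Qprod Om m t *m E1 /\
  Qprod Om m.+1 t *m E1^T = E1^T *m Qprod Om m t.
Proof.
move=> ht E1; elim: t ht => [|t IH] ht.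
  by rewrite !Qprod_0 mulmx1 mul1mx mulmx1 mul1mx.
have ht' : (t.+1 * L <= m * L)%N.
  by apply: leq_trans ht; rewrite leq_mul2r leqnSn orbT.
have [h1 h2] := IH ht'.
have hw : ((t.+1).-1 * L + 2 * L <= m * L)%N by move: ht; rewrite /= !mulSn; lia.
have [q1 q2] := Qemb_commute Om hw.
rewrite !Qprod_S; split.
  by rewrite mulmxA q1 -mulmxA h1 mulmxA.
by rewrite -mulmxA h2 mulmxA q2 mulmxA.
Qed.


Lemma frob2_tr m p (M : 'M[C]_(m,p)) : frob2 M = \tr (ctr M *m M).
Proof.
rewrite /frob2 /mxtrace exchange_big /=; apply: eq_bigr => l _.
rewrite mxE; apply: eq_bigr => i _; by rewrite !mxE normCKC.
Qed.

Lemma frob2_unitary m p (Q : 'M[C]_m) (M : 'M[C]_(m,p)) :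
  ctr Q *m Q = 1%:M -> frob2 (Q *m M) = frob2 M.
Proof. by move=> hQ; rewrite !frob2_tr ctr_mul -mulmxA (mulmxA (ctr Q)) hQ mul1mx. Qed.

Lemma frob2_split s a b p (M : 'M[C]_(s,p)) : s = (a + b)%N ->
  frob2 M = frob2 (Sel a s 0 *m M) + frob2 (Sel b s a *m M).
Proof.
move=> hs; rewrite !frob2_tr !ctr_mul !ctr_Sel -mxtraceD.
by rewrite -!mulmxA -mulmxDr !mulmxA -mulmxDl Selt_sum // mul1mx.
Qed.

Lemma frob2N m p (M : 'M[C]_(m,p)) : frob2 (- M) = frob2 M.
Proof. by rewrite /frob2; apply: eq_bigr => i _; apply: eq_bigr => l _; rewrite mxE normrN. Qed.

Lemma frob2_ge0 m p (M : 'M[C]_(m,p)) : 0 <= frob2 M.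
Proof. by apply: sumr_ge0 => i _; apply: sumr_ge0 => l _; rewrite exprn_ge0. Qed.

Lemma frob2_eq0 m p (M : 'M[C]_(m,p)) : frob2 M = 0 -> M = 0.
Proof.
move=> h; apply/matrixP => i l; rewrite mxE.
have h1 : \sum_(k < p) `|M i k| ^+ 2 = 0.
  move: h; rewrite /frob2 => /psumr_eq0P; apply => // i' _.
  by apply: sumr_ge0 => k _; rewrite exprn_ge0.
have : `|M i l| ^+ 2 = 0.
  by move: h1 => /psumr_eq0P; apply => // k _; rewrite exprn_ge0.
by move/eqP; rewrite expf_eq0 normr_eq0 /= => /eqP.
Qed.

Lemma rank_linv m p q (X : 'M[C]_(q,m)) (U : 'M[C]_(m,q)) (M : 'M[C]_(q,p)) :
  X *m U = 1%:M -> \rank (U *m M) = \rank M.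
Proof.
move=> h; apply/eqP; rewrite eqn_leq mxrankM_maxr /=.
by rewrite -{1}(mul1mx M) -h -mulmxA mxrankM_maxr.
Qed.

Lemma rank_runit m p (M : 'M[C]_(m,p)) (U : 'M[C]_p) :
  U \in unitmx -> \rank (M *m U) = \rank M.
Proof. by move=> hU; rewrite mxrankMfree // row_free_unit. Qed.

Lemma rank_castmx m p m' p' (e : (m = m') * (p = p')) (M : 'M[C]_(m,p)) :
  \rank (castmx e M) = \rank M.
Proof. by case: e => e1 e2; case: m' / e1; case: p' / e2; rewrite castmx_id. Qed.

Lemma unit_castmx m m' (e : m = m') (M : 'M[C]_m) :
  (castmx (e, e) M \in unitmx) = (M \in unitmx).
Proof. by case: m' / e; rewrite castmx_id. Qed.

Lemma rank_ublock a b (R : 'M[C]_a) (Z : 'M[C]_(a,b)) (H : 'M[C]_b) :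
  R \in unitmx -> \rank (block_mx R Z 0 H) = (a + \rank H)%N.
Proof.
move=> hR.
have -> : block_mx R Z 0 H = block_mx R 0 0 H *m block_mx 1%:M (invmx R *m Z) 0 1%:M.
  rewrite mulmx_block !mulmx0 !mul0mx !mulmx1 !addr0 !add0r mulmxA mulmxV //.
  by rewrite mul1mx.
rewrite rank_runit; first by rewrite rank_diag_block_mx mxrank_unit.
by rewrite unitmxE det_ublock !det1 mulr1 unitr1.
Qed.

Lemma entry_SelM q s o p (M : 'M[C]_(s,p)) (i : 'I_q) c :
  entry (Sel q s o *m M) i c = entry M (o + i) c.
Proof.
case: (ltnP c p) => hc; last by rewrite !entry_outc.
by rewrite (entryE _ (ltn_ord i) hc) SelM.
Qed.

Lemma castmx_block s a b (e : s = (a + b)%N) (M : 'M[C]_s) :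
  castmx (e, e) M = block_mx (Sel a s 0 *m M *m (Sel a s 0)^T) (Sel a s 0 *m M *m (Sel b s a)^T)
                             (Sel b s a *m M *m (Sel a s 0)^T) (Sel b s a *m M *m (Sel b s a)^T).
Proof.
apply/matrixP => i l; rewrite castmxE.
rewrite -[i](splitK) -[l]splitK; case: (split i) => i'; case: (split l) => l' /=;
  rewrite ?block_mxEul ?block_mxEur ?block_mxEdl ?block_mxEdr MSelt. all: by rewrite -entry_ord entry_SelM /= ?add0n.
Qed.

Lemma entry_SelMn q s o p (M : 'M[C]_(s,p)) i c : (i < q)%N ->
  entry (Sel q s o *m M) i c = entry M (o + i) c.
Proof.
move=> hi; case: (ltnP c p) => hc; last by rewrite !entry_outc.
by rewrite (entryE _ hi hc) SelM.
Qed.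

Lemma zero_rows m n p (P : 'M[C]_(m,n)) :
  (forall (r : 'I_m) (c : 'I_n), (p <= r)%N -> P r c = 0) ->
  P = (Sel p m 0)^T *m (Sel p m 0 *m P).
Proof.
move=> h; apply/matrixP => r c; rewrite SeltM add0n /= subn0.
case: (ltnP r p) => hr; last by rewrite h.
by rewrite entry_SelMn // add0n entry_ord.
Qed.

Lemma blk0_entry L a b m p (M : 'M[C]_(m,p)) i l :
  blk L a b M = 0 -> (i < L)%N -> (l < L)%N ->
  entry M (a.-1 * L + i) (b.-1 * L + l) = 0.
Proof.
move=> h hi hl; have := congr1 (fun X : 'M_L => X (Ordinal hi) (Ordinal hl)) h.
by rewrite /= !mxE.
Qed.
End H.

Unset Implicit Arguments.

Theorem mainTheorem4 (C : numClosedFieldType) (n L j : nat)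
  (A : 'M[C]_n) (B X0 : 'M[C]_(n, L)) (S0 : 'M[C]_L)
  (W : 'M[C]_(n, j.+1 * L)) (Hbar : 'M[C]_(j.+1 * L, j * L))
  (Om : nat -> 'M[C]_(2 * L)) (Y : 'M[C]_(j.-1 * L, L)) :
  (0 < n)%N -> (0 < L)%N -> (2 <= j)%N ->
  ctr W *m W = 1%:M ->
  B - A *m X0 = lsub n L W *m S0 ->
  upper_tri S0 ->
  A *m lsub n (j * L) W = W *m Hbar ->
  (forall a b, (1 <= a <= j.+1)%N -> (1 <= b <= j)%N -> (b.+1 < a)%N ->
     blk L a b Hbar = 0) ->
  (forall k, (1 <= k <= j)%N -> upper_tri (blk L k.+1 k Hbar)) ->
  \rank Hbar = (j * L)%N ->
  (forall i, (1 <= i <= j)%N -> ctr (Om i) *m Om i = 1%:M) ->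
  (forall k, (1 <= k <= j)%N ->
     let P := Qbar Om k *m lsub (k.+1 * L) (k * L) Hbar in
     [/\ upper_tri (lsub (k * L) (k * L) P),
         lsub (k * L) (k * L) P \in unitmx &
         forall (r : 'I_(k.+1 * L)) (c : 'I_(k * L)), (k * L <= r)%N -> P r c = 0]) ->
  (forall Y' : 'M[C]_(j.-1 * L, L),
     frob2 (lsub (j * L) (j.-1 * L) Hbar *m Y - Eblk C L j *m S0)
       <= frob2 (lsub (j * L) (j.-1 * L) Hbar *m Y' - Eblk C L j *m S0)) ->
  \rank (B - A *m (X0 + lsub n (j.-1 * L) W *m Y)) = L ->
  let Hhat := blk L j j (Qprod Om j.+1 j.-1 *m Hbar) in
  let Ctilde := blk L j 1 (Qprod Om j j.-1 *m (Eblk C L j *m S0)) in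
  let Cj := blk L 1 1 (Om j) *m Ctilde in
  \rank Cj = \rank Hhat /\
  \rank Hhat = (\rank (lsub (j * L) (j * L) Hbar) - j.-1 * L)%N.
Proof.
move=> hn hL hj hW hF0 _ hAr hHess _ _ hOm hQR hmin hrk.
case: j hj W Hbar Y hW hF0 hAr hHess hOm hQR hmin hrk => [|k] // hk W Hbar Y hW hF0 hAr hHess hOm hQR hmin hrk.
rewrite /= in Y hmin hrk *.
have hk1 : (1 <= k)%N by [].
set Q := Qprod Om k.+1 k.
set Q2 := Qprod Om k.+2 k.
set Om1 := Om k.+1.
set Ctilde := blk L k.+1 1 _.
set Hhat := blk L k.+1 k.+1 _.
set Eb := Eblk C L k.+1.
have e1 : (k.+1 * L = k * L + L)%N by rewrite mulSnr.
have e2 : (k.+2 * L = k.+1 * L + L)%N by rewrite mulSnr.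
have hQU : ctr Q *m Q = 1%:M.
  by apply: Qprod_unitary => // i hi; apply: hOm; lia.
have [cm1 cm2] := Qprod_commute Om (leqnn (k.+1 * L)).
set E1 := @Sel C (k.+1 * L) (k.+2 * L) 0 in cm1 cm2.
set Ec := @Sel C (k * L) (k.+1 * L) 0.
set Ed := @Sel C L (k.+1 * L) (k * L).
set Hk := lsub (k.+1 * L) (k * L) Hbar.
have hHk : Hk = E1 *m Hbar *m Ec^T by rewrite /Hk lsub_Sel.
have hHess' : Hbar *m Ec^T = E1^T *m Hk.
  apply/matrixP => r c; rewrite MSelt SeltM add0n /= subn0.
  case: (ltnP r (k.+1 * L)) => hr.
    by rewrite (entryE Hk hr (ltn_ord c)) mxE.
  have hcL : (c %/ L < k)%N by rewrite ltn_divLR.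
  have ha : (0 < k.+2 <= k.+2)%N by rewrite leqnn.
  have hb : (0 < (c %/ L).+1 <= k.+1)%N by rewrite /= ltnS ltnW.
  have hab : ((c %/ L).+2 < k.+2)%N by rewrite !ltnS.
  have h0 := blk0_entry (i := (r - k.+1 * L)%N) (l := (c %% L)%N) (hHess _ _ ha hb hab).
  rewrite /= subnKC // -divn_eq in h0; rewrite h0 //; last by rewrite ltn_mod.
  have hr2 : (r < k.+1 * L + L)%N by rewrite -mulSnr ltn_ord.
  lia.
set Pk := Q *m Hk.
have [_ hRu hPk0] := hQR k (ltac:(lia)).
have hPk : Pk = Ec^T *m (Ec *m Pk) by apply: zero_rows.
set R := Ec *m Pk.
have hR : R \in unitmx by move: hRu; rewrite lsub_Sel Sel_full trmx1 mulmx1.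
have hT : Q2 *m Hbar *m Ec^T = E1^T *m Pk by rewrite -mulmxA hHess' mulmxA cm2 -mulmxA.
have [_ hP1u hP10] := hQR k.+1 (ltac:(lia)).
have eP1 : Qbar Om k.+1 *m lsub (k.+2 * L) (k.+1 * L) Hbar = Qemb Om k.+1 k.+2 *m (Q2 *m Hbar).
  by rewrite /Qbar Qprod_S lsub_Sel !Sel_full trmx1 mul1mx mulmx1 mulmxA.
set P1 := Qemb Om k.+1 k.+2 *m (Q2 *m Hbar).
have hP1z : P1 = E1^T *m (E1 *m P1).
  by apply: zero_rows => r c hr; rewrite /P1 -eP1; apply: hP10.
have hPtu : E1 *m P1 \in unitmx.
  by move: hP1u; rewrite eP1 lsub_Sel Sel_full trmx1 mulmx1.
set Bw := @Sel C (2 * L) (k.+2 * L) (k * L).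
have hQe : Qemb Om k.+1 k.+2 = 1%:M + Bw^T *m (Om1 - 1%:M) *m Bw by rewrite Qemb_Sel.
have hBB : Bw *m Bw^T = 1%:M by apply: Sel_Selt1; rewrite !mulSnr; lia.
have hBP1 : Bw *m P1 = Om1 *m (Bw *m (Q2 *m Hbar)).
  rewrite /P1 hQe mulmxA mulmxDr mulmx1 !mulmxA hBB mul1mx.
  by rewrite -{1}(mul1mx Bw) -mulmxDl addrC subrK.
set Xc := Bw *m (Q2 *m Hbar) *m Ed^T.
have hOX0 : Om1 *m Xc = Bw *m P1 *m Ed^T by rewrite /Xc hBP1 !mulmxA.
set S0' := @Sel C L (2 * L) 0.
set S1' := @Sel C L (2 * L) L.
have hS1B : S1' *m Bw = @Sel C L (k.+2 * L) (k * L + L) by rewrite Sel_mul //; lia.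
have hlow : S1' *m (Om1 *m Xc) = 0.
  rewrite hOX0 hP1z !mulmxA hS1B Sel_Selt0 ?mul0mx //.
  by rewrite add0n -e1 leqnn.
set N := S0' *m (Om1 *m Xc).
have hOX : Om1 *m Xc = S0'^T *m N.
  rewrite -{1}(mul1mx (Om1 *m Xc)) -(@Selt_sum C (2 * L) L L); last by rewrite mul2n addnn.
  by rewrite mulmxDl -!mulmxA hlow mulmx0 addr0.
have hO1 : ctr Om1 *m Om1 = 1%:M by apply: hOm; lia.
have hXc : Xc = ctr Om1 *m (S0'^T *m N) by rewrite -hOX mulmxA hO1 mul1mx.
have hHhat : Hhat = S0' *m Xc.
  rewrite /Hhat blk_Sel /= /Xc !mulmxA; congr (_ *m _ *m _).
  rewrite /S0' /Bw Sel_mul ?addn0 //; lia.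
set O11 := blk L 1 1 Om1.
have hO11 : ctr O11 = S0' *m ctr Om1 *m S0'^T.
  by rewrite /O11 blk_Sel !ctr_mul ctr_Sel ctr_Selt mulmxA.
have hHhatN : Hhat = ctr O11 *m N by rewrite hHhat hXc hO11 !mulmxA.
have hEdE1 : Ed *m E1 = S0' *m Bw.
  rewrite /Ed /E1 /S0' /Bw !Sel_mul ?addn0 //; rewrite ?add0n; lia.
set Pt := E1 *m P1.
have hdl : Ed *m Pt *m Ec^T = 0.
  rewrite /Pt mulmxA hEdE1 -(mulmxA S0' Bw P1) hBP1 -!mulmxA (mulmxA Q2 Hbar) hT hPk.
  rewrite (mulmxA E1^T) -trmx_mul /Ec /E1 Sel_mul ?add0n; last by lia.
  by rewrite (mulmxA Bw) Sel_Selt0 ?mul0mx ?mulmx0 // add0n leqnn.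
have hdr : Ed *m Pt *m Ed^T = N.
  by rewrite /Pt /N mulmxA hEdE1 -(mulmxA S0') hBP1 hOX0 hBP1 !mulmxA.
have hNu : N \in unitmx.
  move: hPtu; rewrite -(unit_castmx e1) (castmx_block e1) hdl.
  by rewrite unitmxE det_ublock unitrM => /andP[_]; rewrite -unitmxE -hdr.
have hEb : Eb = (@Sel C L (k.+1 * L) 0)^T by rewrite /Eb /Eblk lsub_Sel Sel_full !mul1mx.
have hCt : Ctilde = Ed *m (Q *m (Eb *m S0)).
  by rewrite /Ctilde blk_Sel /= Sel_full trmx1 mulmx1.
have hEdPk : Ed *m Pk = 0.
  by rewrite hPk mulmxA Sel_Selt0 ?mul0mx // add0n leqnn.
set G := Ec *m (Q *m (Eb *m S0)).
have decomp : forall Y', frob2 (Hk *m Y' - Eb *m S0) = frob2 (R *m Y' - G) + frob2 Ctilde.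
  move=> Y'; rewrite -(frob2_unitary _ hQU) (frob2_split _ e1).
  have hQr' : Q *m (Hk *m Y' - Eb *m S0) = Pk *m Y' - Q *m (Eb *m S0).
    by rewrite mulmxBr (mulmxA Q Hk).
  rewrite hQr' -/Ec -/Ed !mulmxBr !(mulmxA _ Pk) -/R hEdPk mul0mx sub0r frob2N -hCt.
  done.
have frob20 : forall a b, frob2 (0 : 'M[C]_(a,b)) = 0.
  by move=> a b; rewrite /frob2 big1 // => r _; rewrite big1 // => c _; rewrite mxE normr0 expr0n.
have hRY : R *m Y = G.
  have := hmin (invmx R *m G); rewrite -/Hk -/Eb !decomp mulmxA mulmxV // mul1mx subrr frob20 add0r.
  rewrite gerDr => h; apply/eqP; rewrite -subr_eq0; apply/eqP; apply: frob2_eq0.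
  by apply/le_anti; rewrite h frob2_ge0.
have hWE : lsub n (k.+1 * L) W = W *m E1^T by rewrite lsub_Sel Sel_full mul1mx.
have hWk : lsub n (k * L) W = W *m E1^T *m Ec^T.
  by rewrite lsub_Sel Sel_full mul1mx -mulmxA -trmx_mul /Ec /E1 Sel_mul // add0n; lia.
have hV1 : lsub n L W = W *m E1^T *m Eb.
  by rewrite hEb lsub_Sel Sel_full mul1mx -mulmxA -trmx_mul /E1 Sel_mul // add0n; lia.
have hAWk : A *m lsub n (k * L) W = W *m E1^T *m Hk.
  by rewrite hWk !mulmxA -(mulmxA A) -hWE hAr hWE -mulmxA hHess' mulmxA.
have hF : B - A *m (X0 + lsub n (k * L) W *m Y) = W *m E1^T *m (Eb *m S0 - Hk *m Y).
  rewrite (mulmxDr A) opprD addrA hF0 hV1 (mulmxA A) hAWk mulmxBr !mulmxA.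
  done.
have hWU : ctr (W *m E1^T) *m (W *m E1^T) = 1%:M.
  rewrite ctr_mul ctr_Selt -mulmxA (mulmxA (ctr W)) hW mul1mx Sel_Selt1 //; lia.
have hQr : Q *m (Eb *m S0 - Hk *m Y) = Ed^T *m Ctilde.
  set X := Q *m _.
  rewrite -(mul1mx X) -(@Selt_sum C (k.+1 * L) (k * L) L) // mulmxDl -!mulmxA.
  have -> : Ec *m X = 0.
    by rewrite /X mulmxBr (mulmxA Q Hk) -/Pk mulmxBr (mulmxA Ec Pk) -/R hRY -/G subrr.
  rewrite mulmx0 add0r; congr (_ *m _).
  by rewrite /X mulmxBr (mulmxA Q Hk) mulmxBr (mulmxA Ed Pk) hEdPk mul0mx subr0 hCt.
have hCtr : \rank Ctilde = L.
  rewrite -[RHS]hrk hF (rank_linv _ hWU) -(rank_linv _ hQU) hQr (rank_linv (X := Ed)) //.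
  by apply: Sel_Selt1; rewrite mulSnr.
have hCtu : Ctilde \in unitmx by rewrite -row_free_unit /row_free hCtr.
split.
  by rewrite rank_runit // hHhatN rank_runit // rank_ctr.
have hHj : lsub (k.+1 * L) (k.+1 * L) Hbar = E1 *m Hbar by rewrite lsub_Sel Sel_full trmx1 mulmx1.
rewrite hHj -(rank_linv _ hQU) mulmxA -cm1 -(rank_castmx (e1, e1)) (castmx_block e1).
have hEE : E1 *m E1^T = 1%:M by apply: Sel_Selt1; rewrite add0n; lia.
have hul : Ec *m (E1 *m Q2 *m Hbar) *m Ec^T = R.
  by rewrite -!mulmxA (mulmxA Q2 Hbar) hT (mulmxA E1) hEE mul1mx.
have hdl2 : Ed *m (E1 *m Q2 *m Hbar) *m Ec^T = 0.
  by rewrite -!mulmxA (mulmxA Q2 Hbar) hT (mulmxA E1) hEE mul1mx hEdPk.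
have hdr2 : Ed *m (E1 *m Q2 *m Hbar) *m Ed^T = Hhat.
  rewrite /Hhat blk_Sel /= -!mulmxA (mulmxA Ed) /Ed /E1 Sel_mul ?add0n // -?mulmxA //.
  lia.
rewrite -/Ec -/Ed -/Q2 hul hdl2 hdr2 rank_ublock //.
by rewrite addKn.

Qed.
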